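(* In the gradient-tracking setting (see context), let $K_z=K_y\in\mathbb{R}^{Nd\times Nd}$ be such that $F$ has all its eigenvalues except $d$ of them (counted with algebraic multiplicity) inside the open unit disc. Then for every $\theta_0\in\mathbb{R}^p$ and every initial condition $(x(0),z(0))\in\mathbb{R}^{Nd}\times\mathbb{R}^{Nd}$ with $\sum_{i=1}^N z_i(0)=0$, the trajectory of $\begin{bmatrix}x\\ z\end{bmatrix}^+=F\begin{bmatrix}x\\ z\end{bmatrix}+G\theta_0$ is bounded and $\lim_{t\to\infty}x_i(t)=\Sigma\theta_0$ for every $i=1,\dots,N$.
   Context: Let $N,d,p$ be positive integers. For $i=1,\dots,N$ let $C_i\in\mathbb{R}^{d\times d}$ be symmetric positive definite and $\Gamma_i\in\mathbb{R}^{d\times p}$; set $Q_i:=-C_i\Gamma_i$, $C:=\mathrm{diag}(C_1,\dots,C_N)$ (block diagonal), $Q:=\mathrm{col}(Q_1,\dots,Q_N)$, and $\Sigma:=\big(\sum_{i=1}^N C_i\big)^{-1}\sum_{i=1}^N C_i\Gamma_i$; $\Sigma\theta_0$ is the unique minimizer of $\sum_i \frac12(\theta-\Gamma_i\theta_0)^\top C_i(\theta-\Gamma_i\theta_0)$. Gradient-tracking setting: $A\in\mathbb{R}^{N\times N}$ is row stochastic ($A\mathbf{1}_N=\mathbf{1}_N$, nonnegative entries) and $\tilde A\in\mathbb{R}^{N\times N}$ is column stochastic ($\mathbf{1}_N^\top\tilde A=\mathbf{1}_N^\top$, nonnegative entries), each having $1$ as a simple eigenvalue with all other eigenvalues in the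 open unit disc; $\mathbf{A}:=A\otimes I_d$, $\tilde{\mathbf{A}}:=\tilde A\otimes I_d$. State $(x,z)$ with $x=(x_1,\dots,x_N)$, $z=(z_1,\dots,z_N)$, $x_i,z_i\in\mathbb{R}^d$. For gains $K_y,K_z\in\mathbb{R}^{Nd\times Nd}$, $F=\begin{bmatrix}\mathbf{A}+K_yC & K_z\\ (\tilde{\mathbf{A}}-I_{Nd})C & \tilde{\mathbf{A}}\end{bmatrix}$, $G=\begin{bmatrix}K_yQ\\ (\tilde{\mathbf{A}}-I_{Nd})Q\end{bmatrix}$, $\theta_0\in\mathbb{R}^p$. *)

(* Defs.v *)
From HB Require Import structures.
From mathcomp Require Import all_boot all_order all_algebra.
Set Implicit Arguments. Unset Strict Implicit. Unset Printing Implicit Defensive.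
Import Order.TTheory GRing.Theory Num.Theory.
Local Open Scope ring_scope.

(* Splitting an index k < N*d into a block index k %/ d < N and an offset k %% d < d.
   The stacked vector x = col(x_1,...,x_N) has (x_i)_a = x_(i*d + a). *)
Lemma blk_lt (N d : nat) (k : 'I_(N * d)) : (k %/ d < N)%N.
Proof.
case: d k => [|d] k; first by case: k => k; rewrite muln0.
by rewrite ltn_divLR.
Qed.

Lemma off_lt (N d : nat) (k : 'I_(N * d)) : (k %% d < d)%N.
Proof.
case: d k => [|d] k; first by case: k => k; rewrite muln0.
by rewrite ltn_pmod.
Qed.

Lemma idx_lt (N d : nat) (i : 'I_N) (a : 'I_d) : (i * d + a < N * d)%N.
Proof.
apply: (@leq_trans (i.+1 * d)); first by rewrite mulSn addnC ltn_add2r.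
by rewrite leq_mul2r ltn_ord orbT.
Qed.

Definition blk (N d : nat) (k : 'I_(N * d)) : 'I_N := Ordinal (blk_lt k).
Definition off (N d : nat) (k : 'I_(N * d)) : 'I_d := Ordinal (off_lt k).
Definition idx (N d : nat) (i : 'I_N) (a : 'I_d) : 'I_(N * d) := Ordinal (idx_lt i a).

Definition block_of (R : Type) (N d : nat) (x : 'cV[R]_(N * d)) (i : 'I_N) : 'cV[R]_d :=
  \col_(a < d) x (idx i a) ord0.

Definition kron (R : pzRingType) (m n p q : nat) (A : 'M[R]_(m, n)) (B : 'M[R]_(p, q))
  : 'M[R]_(m * p, n * q) :=
  \matrix_(k, l) (A (blk k) (blk l) * B (off k) (off l)).

Definition blkdiag (R : pzRingType) (N d : nat) (Cs : 'I_N -> 'M[R]_d) : 'M[R]_(N * d) :=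
  \matrix_(k, l) (if blk k == blk l then Cs (blk k) (off k) (off l) else 0).

Definition blkcol (R : pzRingType) (N d p : nat) (Qs : 'I_N -> 'M[R]_(d, p)) : 'M[R]_(N * d, p) :=
  \matrix_(k, j) Qs (blk k) (off k) j.

Definition eigenvalues_are (K : numClosedFieldType) (n : nat) (M : 'M[K]_n) (rs : seq K) :=
  char_poly M = \prod_(z <- rs) ('X - z%:P).

Definition real_mx (K : numClosedFieldType) (m n : nat) (M : 'M[K]_(m, n)) :=
  forall i j, M i j \is Num.real.

Definition sym_posdef (K : numClosedFieldType) (d : nat) (M : 'M[K]_d) :=
  [/\ real_mx M, M^T = M &
      forall v : 'cV[K]_d, real_mx v -> v != 0 -> 0 < (v^T *m M *m v) ord0 ord0].

Definition row_stochastic_good (K : numClosedFieldType) (N : nat) (A : 'M[K]_N) :=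
  [/\ forall i j, 0 <= A i j,
      A *m (const_mx 1 : 'cV[K]_N) = const_mx 1 &
      exists rs, [/\ eigenvalues_are A rs, count (pred1 1) rs = 1%N &
                     all (fun z => (z == 1) || (`|z| < 1)) rs]].

Definition col_stochastic_good (K : numClosedFieldType) (N : nat) (A : 'M[K]_N) :=
  [/\ forall i j, 0 <= A i j,
      (const_mx 1 : 'rV[K]_N) *m A = const_mx 1 &
      exists rs, [/\ eigenvalues_are A rs, count (pred1 1) rs = 1%N &
                     all (fun z => (z == 1) || (`|z| < 1)) rs]].

Section GT.
Variables (K : numClosedFieldType) (N d p : nat).
Variables (Cs : 'I_N -> 'M[K]_d) (Gs : 'I_N -> 'M[K]_(d, p)) (A At : 'M[K]_N)
          (Ky Kz : 'M[K]_(N * d)).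

Definition Cbig : 'M[K]_(N * d) := blkdiag Cs.
Definition Qbig : 'M[K]_(N * d, p) := blkcol (fun i => - (Cs i *m Gs i)).
Definition Abig : 'M[K]_(N * d) := kron A (1%:M : 'M[K]_d).
Definition Atbig : 'M[K]_(N * d) := kron At (1%:M : 'M[K]_d).

Definition Fmx : 'M[K]_(N * d + N * d) :=
  block_mx (Abig + Ky *m Cbig) Kz ((Atbig - 1%:M) *m Cbig) Atbig.
Definition Gmx : 'M[K]_(N * d + N * d, p) :=
  col_mx (Ky *m Qbig) ((Atbig - 1%:M) *m Qbig).
Definition Sigma : 'M[K]_(d, p) :=
  invmx (\sum_(i < N) Cs i) *m (\sum_(i < N) Cs i *m Gs i).
End GT.

(* Main.v *)
Require Import Defs.
From HB Require Import structures.
From mathcomp Require Import all_boot all_order all_algebra.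
From mathcomp Require Import ring.
Import Order.TTheory GRing.Theory Num.Theory.
Local Open Scope ring_scope.

Section Analysis.
Variable K : archiClosedFieldType.

Definition cvg0 (u : nat -> K) := forall eps : K, 0 < eps ->
  exists T, forall t, (T <= t)%N -> `|u t| < eps.

Lemma L1 (r : K) (u w : nat -> K) : `|r| < 1 ->
  (forall t, u t.+1 = r * u t + w t) -> cvg0 w -> cvg0 u.
Proof.
move=> hr hu hw eps he.
set rho := `|r|.
have rho0 : 0 <= rho := normr_ge0 r.
have h1 : 0 < 1 - rho by rewrite subr_gt0.
set del := (1 - rho) * eps / 2%:R.
have hdel : 0 < del by rewrite /del divr_gt0 ?mulr_gt0 ?ltr0n.
have [T hT] := hw del hdel.
have step : forall t, (T <= t)%N -> `|u t.+1| <= rho * `|u t| + del.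
  move=> t ht; rewrite hu; apply: le_trans (ler_normD _ _) _.
  by rewrite normrM lerD2l ltW ?hT.
have stepA : forall t, (T <= t)%N -> `|u t| < eps -> `|u t.+1| < eps.
  move=> t ht hlt; apply: le_lt_trans (step t ht) _.
  have -> : eps = rho * eps + (del + del).
    by rewrite /del; field.
  apply: ler_ltD; first by rewrite ler_wpM2l // ltW.
  by rewrite ltrDr.
have stepB : forall t, (T <= t)%N -> eps <= `|u t| ->
    `|u t.+1| <= `|u t| - del.
  move=> t ht hle; apply: le_trans (step t ht) _.
  rewrite -subr_ge0.
  have -> : `|u t| - del - (rho * `|u t| + del) = (1 - rho) * (`|u t| - eps).
    by rewrite /del; field.
  by rewrite mulr_ge0 ?subr_ge0 // ltW.
have claim : forall j, `|u (T + j)%N| < eps \/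
    `|u (T + j)%N| <= `|u T| - j%:R * del.
  elim=> [|j IH]; first by right; rewrite addn0 mul0r subr0.
  rewrite addnS; case: IH => [H|H]; first by left; apply: stepA => //; rewrite leq_addr.
  have [hle|hlt] := real_leP (gtr0_real he) (normr_real (u (T + j)%N)).
    right; apply: le_trans (stepB _ (leq_addr _ _) hle) _.
    have -> : j.+1%:R * del = j%:R * del + del by rewrite -natr1 mulrDl mul1r.
    by rewrite opprD addrA lerB.
  by left; apply: stepA => //; rewrite leq_addr.
set n0 := Num.bound (`|u T| / del).
have hn0 : `|u T| < n0%:R * del.
  by rewrite -ltr_pdivrMr // archi_boundP // divr_ge0 // ltW.
have hT0 : `|u (T + n0)%N| < eps.
  case: (claim n0) => // H; exfalso.
  have : `|u (T + n0)%N| < 0.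
    by apply: le_lt_trans H _; rewrite subr_lt0.
  by move/(le_lt_trans (normr_ge0 _)); rewrite ltxx.
exists (T + n0)%N => t ht.
rewrite -(subnKC ht); elim: (t - (T + n0))%N => [|k IH]; first by rewrite addn0.
by rewrite addnS; apply: stepA => //; rewrite -addnA leq_addr.
Qed.

Lemma cvg0_bounded (u : nat -> K) : cvg0 u -> exists M, 0 <= M /\ forall t, `|u t| <= M.
Proof.
move=> hu; have [T hT] := hu 1 ltr01.
exists (1 + \sum_(i < T) `|u i|); split.
  by rewrite addr_ge0 ?ler01 // sumr_ge0.
move=> t; case: (leqP T t) => h.
  apply: le_trans (ltW (hT t h)) _; by rewrite lerDl sumr_ge0.
rewrite (bigD1 (Ordinal h)) //=.
apply: ler_wpDl; first exact: ler01.
by rewrite lerDl sumr_ge0.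
Qed.

Lemma CH_roots n (M : 'M[K]_n) (rs : seq K) :
  char_poly M = \prod_(r <- rs) ('X - r%:P) -> \prod_(r <- rs) (M - r%:M) = 0.
Proof.
case: n M => [|n] M h; first by apply/matrixP => -[].
have := Cayley_Hamilton M; rewrite h rmorph_prod /=.
by under eq_bigr do rewrite rmorphB /= horner_mx_X horner_mx_C.
Qed.

Lemma L2 n (M : 'M[K]_n) (rs : seq K) : all (fun r => `|r| < 1) rs ->
  forall v : 'cV[K]_n, (\prod_(r <- rs) (M - r%:M)) *m v = 0 ->
  forall k, cvg0 (fun t => (M ^+ t *m v) k ord0).
Proof.
have cm : forall a b : K, GRing.comm (M - a%:M) (M - b%:M).
  move=> a b; apply: commrB.
    apply: commr_sym; apply: commrB; first exact: commr_refl.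
    by rewrite /GRing.comm -!mulmxE scalar_mxC.
  apply: commr_sym; apply: commrB; rewrite /GRing.comm -!mulmxE scalar_mxC //.
elim: rs => [|r rs IH] /= hall v hv k.
  rewrite big_nil mul1mx in hv; rewrite hv => eps he; exists 0%N => t _.
  by rewrite mulmx0 mxE normr0.
case/andP: hall => hr hall.
set w := (M - r%:M) *m v.
have hw : (\prod_(s <- rs) (M - s%:M)) *m w = 0.
  rewrite /w mulmxA mulmxE -(commr_prod rs (fun s _ => cm r s)).
  by move: hv; rewrite big_cons.
apply: (@L1 r _ (fun t => (M ^+ t *m w) k ord0) hr); last exact: (IH hall w hw k).
move=> t /=.
rewrite exprSr -mulmxE -mulmxA.
have -> : M *m v = w + r *: v by rewrite /w mulmxBl mul_scalar_mx addrNK.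
by rewrite mulmxDr -scalemxAr !mxE addrC.
Qed.
End Analysis.

Lemma char_deflate (K : fieldType) n d (F : 'M[K]_n) (W : 'M[K]_(d,n)) (R : 'M[K]_(n,d)) :
  W *m F = W -> W *m R = 1%:M ->
  char_poly (F - F *m R *m W) * ('X - 1) ^+ d = char_poly F * 'X ^+ d.
Proof.
move=> hWF hWR.
set Ap := char_poly_mx F.
set Up := map_mx polyC (F *m R).
set Wp := map_mx polyC W.
have h1 : char_poly_mx (F - F *m R *m W) = Ap + Up *m Wp.
  by rewrite /char_poly_mx /Ap /Up /Wp map_mxB map_mxM opprB addrA addrAC.
have hWA : Wp *m Ap = ('X - 1) *: Wp.
  by rewrite /Ap /char_poly_mx mulmxBr mul_mx_scalar -map_mxM hWF scalerBl scale1r.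
have hWU : Wp *m Up = 1%:M by rewrite -map_mxM mulmxA hWF hWR map_mx1.
set M1 := block_mx Ap (-Up) Wp (1%:M : 'M_d).
have e1 : M1 *m block_mx 1%:M 0 (-Wp) 1%:M = block_mx (Ap + Up *m Wp) (-Up) 0 1%:M.
  by rewrite mulmx_block !mulmx1 !mul1mx !mulmx0 !add0r mulNmx mulmxN opprK addrN.
have e2 : block_mx 1%:M 0 (-Wp) ('X - 1)%:M *m M1 = block_mx Ap (-Up) 0 ('X%:M : 'M_d).
  rewrite mulmx_block !mul1mx !mul0mx !addr0 !mulmx1 mulNmx hWA mul_scalar_mx addNr.
  by rewrite mulmxN mulNmx opprK hWU -raddfD /= addrC subrK.
have d1 := congr1 determinant e1.
have d2 := congr1 determinant e2.
rewrite det_mulmx det_lblock det_ublock !det1 !mulr1 in d1.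
rewrite det_mulmx det_lblock det_ublock !det1 mul1r !det_scalar in d2.
rewrite /char_poly h1 -d1 mulrC d2.
done.
Qed.

Lemma roots_in_disc (K : archiClosedFieldType) n d (F Ft : 'M[K]_n) (rs : seq K) :
  char_poly Ft * ('X - 1) ^+ d = char_poly F * 'X ^+ d ->
  char_poly F = \prod_(z <- rs) ('X - z%:P) ->
  count (fun z => ~~ (`|z| < 1)) rs = d ->
  exists rs', char_poly Ft = \prod_(z <- rs') ('X - z%:P) /\ all (fun z => `|z| < 1) rs'.
Proof.
move=> h hF hc.
have [rs' hrs'] := closed_field_poly_normal (char_poly Ft).
rewrite (monicP (char_poly_monic Ft)) scale1r in hrs'.
exists rs'; split => //.
have hp : forall (c : K) m, ('X - c%:P) ^+ m = \prod_(z <- nseq m c) ('X - z%:P).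
  move=> c m; rewrite big_nseq; elim: m => [|m IH]; first by rewrite expr0.
  by rewrite exprS IH.
have hX : ('X : {poly K}) ^+ d = \prod_(z <- nseq d 0) ('X - z%:P).
  by rewrite -hp polyC0 subr0.
move: h; rewrite hrs' hF hp hX -!big_cat => /prod_XsubC_eq /permP heq.
have := heq (fun z => ~~ (`|z| < 1)); rewrite !count_cat !count_nseq hc /=.
rewrite normr1 normr0 ltxx ltr01 /= mul1n mul0n addn0 -{2}[d]add0n => /eqP.
rewrite eqn_add2r => /eqP h0.
apply/allP => z hz; apply/negPn.
have : ~~ has (fun z => ~~ (`|z| < 1)) rs' by rewrite has_count h0.
by move/hasPn/(_ z hz).
Qed.

Section Idx.
Variables N d : nat.

Lemma blk_idx (i : 'I_N) (a : 'I_d) : blk (idx i a) = i.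
Proof.
apply: val_inj => /=; have ad := ltn_ord a.
by rewrite divnMDl ?(leq_ltn_trans (leq0n a)) // divn_small // addn0.
Qed.

Lemma off_idx (i : 'I_N) (a : 'I_d) : off (idx i a) = a.
Proof. by apply: val_inj => /=; rewrite modnMDl modn_small. Qed.

Lemma idx_blk_off (k : 'I_(N * d)) : idx (blk k) (off k) = k.
Proof. by apply: val_inj => /=; rewrite -divn_eq. Qed.

Lemma sum_idx (R : nmodType) (F : 'I_(N * d) -> R) :
  \sum_k F k = \sum_(i < N) \sum_(a < d) F (idx i a).
Proof.
rewrite pair_big /=.
rewrite (reindex (fun k : 'I_(N * d) => (blk k, off k))) /=.
  by apply: eq_bigr => k _; rewrite idx_blk_off.
exists (fun p : 'I_N * 'I_d => idx p.1 p.2) => [k _|[i a] _] /=.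
  by rewrite idx_blk_off.
by rewrite blk_idx off_idx.
Qed.
End Idx.

Lemma sum_delta (R : pzSemiRingType) m (a : 'I_m) (f : 'I_m -> R) :
  \sum_(b < m) (b == a)%:R * f b = f a.
Proof.
rewrite (bigD1 a) //= eqxx mul1r big1 ?addr0 // => b /negbTE ->.
by rewrite mul0r.
Qed.

Lemma id_entry (R : pzSemiRingType) n (a b : 'I_n) : (1%:M : 'M[R]_n) a b = (a == b)%:R.
Proof. by rewrite mxE. Qed.

Section Conc.
Variables (K : archiClosedFieldType) (N d p : nat).
Variables (Cs : 'I_N -> 'M[K]_d) (Gs : 'I_N -> 'M[K]_(d, p)) (A At : 'M[K]_N).

Definition Jm : 'M[K]_(d, N * d) := \matrix_(a, k) (off k == a)%:R.

Lemma JmE m (M : 'M[K]_(N * d, m)) a j : (Jm *m M) a j = \sum_i M (idx i a) j.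
Proof.
rewrite mxE sum_idx; apply: eq_bigr => i _.
under eq_bigr do rewrite mxE off_idx.
exact: sum_delta.
Qed.

Lemma J_Atbig : (forall j, \sum_i At i j = 1) -> Jm *m Atbig d At = Jm.
Proof.
move=> hs; apply/matrixP => a l; rewrite JmE.
under eq_bigr do rewrite mxE blk_idx off_idx id_entry.
by rewrite -mulr_suml hs mul1r mxE eq_sym.
Qed.

Lemma Abig_const (v : 'cV[K]_d) : (forall i, \sum_j A i j = 1) ->
  Abig d A *m (\col_k v (off k) ord0) = \col_k v (off k) ord0.
Proof.
move=> hs; apply/matrixP => k z; rewrite !mxE sum_idx.
under eq_bigr do under eq_bigr do rewrite !mxE blk_idx off_idx.
transitivity (\sum_(i < N) A (blk k) i * v (off k) ord0).
  apply: eq_bigr => i _.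
  rewrite (bigD1 (off k)) //= eqxx mulr1 big1 ?addr0 // => b hb.
  by rewrite eq_sym (negbTE hb) mulr0 mul0r.
by rewrite -mulr_suml hs mul1r.
Qed.

Lemma J_Cbig (v : 'cV[K]_d) :
  Jm *m (Cbig Cs *m \col_k v (off k) ord0) = (\sum_i Cs i) *m v.
Proof.
apply/matrixP => a z; rewrite JmE (ord1 z).
under eq_bigr do rewrite mxE sum_idx.
rewrite mxE.
transitivity (\sum_i \sum_b Cs i a b * v b ord0).
  apply: eq_bigr => i _; rewrite (bigD1 i) //= [X in _ + X]big1 ?addr0.
    by apply: eq_bigr => b _; rewrite /Cbig /blkdiag !mxE !blk_idx !off_idx eqxx.
  move=> j /negbTE hj; rewrite big1 // => c _.
  by rewrite /Cbig /blkdiag !mxE !blk_idx eq_sym hj mul0r.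
by rewrite exchange_big /=; apply: eq_bigr => b _; rewrite summxE mulr_suml.
Qed.

Lemma J_Qbig (th : 'cV[K]_p) :
  Jm *m (Qbig Cs Gs *m th) = - ((\sum_i Cs i *m Gs i) *m th).
Proof.
apply/matrixP => a z; rewrite JmE (ord1 z) !mxE.
rewrite -sumrN.
under eq_bigr do rewrite mxE.
under [RHS]eq_bigr do rewrite summxE mulr_suml -sumrN.
rewrite [RHS]exchange_big; apply: eq_bigr => i _; apply: eq_bigr => j _.
by rewrite /Qbig /blkcol !mxE blk_idx off_idx mulNr.
Qed.

End Conc.

Lemma sumC_unit (K : archiClosedFieldType) N d (Cs : 'I_N -> 'M[K]_d) :
  (0 < N)%N -> (forall i, sym_posdef (Cs i)) -> (\sum_i Cs i) \in unitmx.
Proof.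
move=> hN hC.
set S := \sum_i Cs i.
have Sreal : forall i j, S i j \is Num.real.
  move=> i j; rewrite summxE; apply: rpred_sum => k _.
  by case: (hC k) => /(_ i j).
have Ssym : S^T = S.
  apply/matrixP => i j; rewrite !mxE !summxE; apply: eq_bigr => k _.
  by case: (hC k) => _ ht _; rewrite -[in RHS]ht mxE.
have pos : forall w : 'cV_d, real_mx w -> w != 0 -> 0 < (w^T *m S *m w) ord0 ord0.
  move=> w hw hw0; rewrite /S mulmx_sumr mulmx_suml summxE (bigD1 (Ordinal hN)) //=.
  have hp := fun i => (let: And3 _ _ h := hC i in h) w hw hw0.
  apply: (lt_le_trans (hp (Ordinal hN))); rewrite lerDl sumr_ge0 // => i _.
  exact: ltW.
rewrite unitmxE unitfE; apply/negP => /det0P [u hu0 huS].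
set v := u^T.
have hv : S *m v = 0 by rewrite /v -{1}Ssym -trmx_mul huS trmx0.
set vr := map_mx (fun x => 'Re x) v.
set vi := map_mx (fun x => 'Im x) v.
have hr : S *m vr = 0.
  apply/matrixP => i j; rewrite !mxE.
  move: (congr1 (fun M : 'cV_d => 'Re (M i j)) hv) => /=.
  rewrite !mxE raddf0 raddf_sum => h; rewrite -[X in _ = X]h; apply: eq_bigr => k _.
  by rewrite mxE /= (ReMl (Sreal i k)).
have hi : S *m vi = 0.
  apply/matrixP => i j; rewrite !mxE.
  move: (congr1 (fun M : 'cV_d => 'Im (M i j)) hv) => /=.
  rewrite !mxE raddf0 raddf_sum => h; rewrite -[X in _ = X]h; apply: eq_bigr => k _.
  by rewrite mxE /= ImMl.
have key : forall w : 'cV_d, real_mx w -> S *m w = 0 -> w = 0.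
  move=> w hw hSw; apply/eqP; apply/negPn/negP => hw0.
  have := pos w hw hw0; by rewrite -mulmxA hSw mulmx0 mxE ltxx.
have vr0 : vr = 0 by apply: key => // i j; rewrite mxE Creal_Re.
have vi0 : vi = 0 by apply: key => // i j; rewrite mxE Creal_Im.
apply: (negP hu0); apply/eqP.
apply: trmx_inj; rewrite trmx0 -/v.
apply/matrixP => i j; rewrite [v i j]Crect [in RHS]mxE.
have -> : 'Re (v i j) = vr i j by rewrite /vr [in RHS]mxE.
have -> : 'Im (v i j) = vi i j by rewrite /vi [in RHS]mxE.
by rewrite vr0 vi0 !mxE mulr0 addr0.
Qed.

Theorem proposition2 (K : archiClosedFieldType) (N d p : nat)
  (hN : (0 < N)%N) (hd : (0 < d)%N) (hp : (0 < p)%N)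
  (Cs : 'I_N -> 'M[K]_d) (Gs : 'I_N -> 'M[K]_(d, p)) (A At : 'M[K]_N)
  (hC : forall i, sym_posdef (Cs i)) (hG : forall i, real_mx (Gs i))
  (hA : row_stochastic_good A) (hAt : col_stochastic_good At)
  (Ky Kz : 'M[K]_(N * d)) (hKy : real_mx Ky) (hKz : Kz = Ky)
  (hF : exists rs, eigenvalues_are (Fmx Cs A At Ky Kz) rs /\
                   count (fun z => ~~ (`|z| < 1)) rs = d)
  (theta0 : 'cV[K]_p) (htheta : real_mx theta0)
  (s : nat -> 'cV[K]_(N * d + N * d))
  (hs0 : real_mx (s 0%N))
  (hz0 : \sum_(i < N) block_of (dsubmx (s 0%N)) i = 0)
  (hrec : forall t, s t.+1 = Fmx Cs A At Ky Kz *m s t + Gmx Cs Gs At Ky *m theta0) :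
  (exists M : K, forall t k, `|s t k ord0| <= M) /\
  (forall i : 'I_N, forall eps : K, 0 < eps ->
     exists T : nat, forall t, (T <= t)%N -> forall a : 'I_d,
       `|block_of (usubmx (s t)) i a ord0 - (Sigma Cs Gs *m theta0) a ord0| < eps).
Proof.
subst Kz.
set Fm := Fmx Cs A At Ky Ky.
set Gm := Gmx Cs Gs At Ky.
have rowsum : forall i, \sum_j A i j = 1.
  case: hA => _ h _ i; have := congr1 (fun M : 'cV[K]_N => M i ord0) h; rewrite !mxE => h'.
  rewrite -[X in _ = X]h'; apply: eq_bigr => j _; by rewrite mxE mulr1.
have colsum : forall j, \sum_i At i j = 1.
  case: hAt => _ h _ j; have := congr1 (fun M : 'rV[K]_N => M ord0 j) h; rewrite !mxE => h'.
  rewrite -[X in _ = X]h'; apply: eq_bigr => i _; by rewrite mxE mul1r.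
set J := Jm K N d.
set W : 'M[K]_(d, N * d + N * d) := row_mx 0 J.
set E : 'M[K]_(N * d, d) := \matrix_(k, a) ((k : nat) == a)%:R.
set Rm : 'M[K]_(N * d + N * d, d) := col_mx 0 E.
have hWF : W *m Fm = W.
  rewrite /W /Fm /Fmx mul_row_block !mul0mx !add0r.
  have hJA : J *m Atbig d At = J by apply: J_Atbig.
  by rewrite mulmxA mulmxBr mulmx1 hJA subrr mul0mx.
have hWR : W *m Rm = 1%:M.
  rewrite /W /Rm mul_row_col mul0mx add0r.
  apply/matrixP => a b; rewrite JmE (bigD1 (Ordinal hN)) //= big1 ?addr0.
    by rewrite !mxE /= mul0n add0n.
  move=> i hi; rewrite mxE /=.
  suff -> : (i * d + a == b)%N = false by [].
  apply/negbTE/eqP => h.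
  have hi0 : (i : nat) != 0%N.
    by apply: contraNneq hi => h0; apply/eqP; apply: val_inj.
  have : (d <= i * d + a)%N.
    by apply: leq_trans (leq_addr _ _); rewrite leq_pmull // lt0n.
  by rewrite h leqNgt ltn_ord.
set Sg := Sigma Cs Gs *m theta0.
set xs : 'cV[K]_(N * d) := \col_k Sg (off k) ord0.
set zs := - (Cbig Cs *m xs + Qbig Cs Gs *m theta0).
set ss := col_mx xs zs.
have hunit := @sumC_unit _ _ _ Cs hN hC.
have hJz : J *m zs = 0.
  rewrite /zs mulmxN mulmxDr /J J_Cbig J_Qbig.
  by rewrite /Sg /Sigma !mulmxA mulmxV // mul1mx addrN oppr0.
have hss : Fm *m ss + Gm *m theta0 = ss.
  rewrite /Fm /Fmx /Gm /Gmx /ss mul_block_col mul_col_mx add_col_mx.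
  congr col_mx.
    rewrite mulmxDl Abig_const // -!addrA -!mulmxA -!mulmxDr /zs opprD.
    by rewrite subrK addrN mulmx0 addr0.
  rewrite -!mulmxA addrAC -mulmxDr /zs mulmxN mulmxBl mul1mx addrAC subrr add0r.
  done.
have hWss : W *m ss = 0 by rewrite /W /ss mul_row_col mul0mx add0r hJz.
have hW0 : W *m s 0%N = 0.
  rewrite /W -[s 0%N]vsubmxK mul_row_col mul0mx add0r.
  apply/matrixP => a j; rewrite JmE (ord1 j) mxE.
  have := congr1 (fun M : 'cV[K]_d => M a ord0) hz0; rewrite summxE mxE => h.
  rewrite -[X in _ = X]h; apply: eq_bigr => i _; by rewrite /block_of [RHS]mxE -(ord1 ord0).
set e := fun t => s t - ss.
have he : forall t, e t.+1 = Fm *m e t.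
  move=> t; rewrite /e hrec -[X in _ - X]hss mulmxBr opprD addrACA subrr addr0.
  done.
have hWe : forall t, W *m e t = 0.
  elim => [|t IH]; first by rewrite /e mulmxBr hW0 hWss subrr.
  by rewrite he mulmxA hWF IH.
set Ft := Fm - Fm *m Rm *m W.
have heFt : forall t, e t = Ft ^+ t *m e 0%N.
  elim => [|t IH]; first by rewrite expr0 mul1mx.
  rewrite exprS -mulmxE -mulmxA -IH /Ft mulmxBl -!mulmxA hWe !mulmx0 subr0.
  by rewrite he.
have hch := @char_deflate _ _ _ Fm W Rm hWF hWR.
case: hF => rs [hrs hcnt].
have [rs' [hrs' hall]] := @roots_in_disc _ _ _ Fm Ft rs hch hrs hcnt.
have hprod := @CH_roots _ _ Ft rs' hrs'.
have hconv : forall k, cvg0 K (fun t => e t k ord0).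
  move=> k; have h0 : (\prod_(r <- rs') (Ft - r%:M)) *m e 0%N = 0 by rewrite hprod mul0mx.
  have h := @L2 _ _ Ft rs' hall (e 0%N) h0 k.
  move=> eps heps; have [T hT] := h eps heps; exists T => t ht.
  by rewrite heFt; exact: hT.
split.
  have hb : forall k, exists M, 0 <= M /\ forall t, `|e t k ord0| <= M.
    by move=> k; apply: cvg0_bounded.
  have [Mf hMf] := fin_all_exists hb.
  exists (\sum_k (Mf k + `|ss k ord0|)) => t k.
  have -> : s t = e t + ss by rewrite /e subrK.
  rewrite mxE; apply: le_trans (ler_normD _ _) _.
  rewrite (bigD1 k) //=; apply: ler_wpDr.
    by apply: sumr_ge0 => i _; rewrite addr_ge0 ?(hMf i).1.
  by rewrite lerD2r (hMf k).2.
move=> i eps heps.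
have hTa : forall a : 'I_d, exists T, forall t, (T <= t)%N ->
    `|e t (lshift (N * d) (idx i a)) ord0| < eps.
  by move=> a; apply: hconv.
have [Tf hTf] := fin_all_exists hTa.
exists (\max_(a < d) Tf a)%N => t ht a.
have -> : block_of (usubmx (s t)) i a ord0 - (Sigma Cs Gs *m theta0) a ord0
    = e t (lshift (N * d) (idx i a)) ord0.
  rewrite /e [RHS]mxE [X in _ = _ + X]mxE; congr (_ + _); last congr (- _).
    by rewrite /block_of !mxE.
  by rewrite /ss col_mxEu /xs [RHS]mxE off_idx.
apply: hTf; apply: leq_trans ht; exact: (leq_bigmax a).
Qed.
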